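(* Let $U\subseteq\mathbb{C}$ be open and $h:U\to\mathbb{C}$ holomorphic without zeros on $U$, $h=h_1+ih_2$ with $h_1,h_2$ real-valued functions of $(z_1,z_2)$, $z=z_1+iz_2$. Equip $U\subseteq\mathbb{R}^2$ with the Riemannian metric $g_{11}=g_{22}=1/(h_1^2+h_2^2)$, $g_{12}=g_{21}=0$ in coordinates $(z_1,z_2)$, and let $\nabla$ be its Levi-Civita connection. Let $\mathbf{h}=(h_1,h_2)^T$ and define the vector fields $\mathtt{h}=h_1\partial_1+h_2\partial_2$ and $\bar{\mathtt{h}}=-h_2\partial_1+h_1\partial_2$. Let $\mathtt{X}=X^1\partial_1+X^2\partial_2$ be a vector field such that $X^1+iX^2$ is a holomorphic function of $z=z_1+iz_2$ on $U$, and write $\mathbf{X}=(X^1,X^2)^T$. Let $J_{\mathbf{X}},J_{\mathbf{h}}\in\mathbb{R}^{2\times2}$ be the Jacobian matrices of $\mathbf{X}$ and $\mathbf{h}$ with respect to $(z_1,z_2)$, and $E=\begin{pmatrix}0&-1\\1&0\end{pmatrix}$. Then $$\nabla_{\mathtt{h}}\mathtt{X}=\sum_{k=1}^2\big(J_{\mathbf{X}}\mathbf{h}-J_{\mathbf{h}}\mathbf{X}\big)^k\partial_k,\qquad \nabla_{\bar{\mathtt{h}}}\mathtt{X}=\sum_{k=1}^2\big(E(J_{\mathbf{X}}\mathbf{h}-J_{\mathbf{h}}\mathbf{X})\big)^k\partial_k,$$ where $(\cdot)^k$ denotes the $k$-th component of a vector in $\mathbb{R}^2$.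
   Context: $\partial_k$ denotes the coordinate tangent vector in direction $z_k$. A vector field $X^1\partial_1+X^2\partial_2$ with $X^1+iX^2$ holomorphic is called a holomorphic splitting (of the holomorphic function $X^1+iX^2$); $\mathtt{h}$ and $\bar{\mathtt{h}}$ are the holomorphic splittings of $h$ and $ih$ respectively. *)

(* Defs.v *)
From Stdlib Require Import Reals.
From Coquelicot Require Import Coquelicot.
Open Scope R_scope.

(* Coordinates (z1,z2) on R^2 = C; indices k = 0,1 stand for 1,2. *)

Definition holomorphic_on (U : C -> Prop) (f : C -> C) : Prop :=
  forall z : C, U z -> @ex_derive C_AbsRing C_NormedModule f z.

Definition re_part (f : C -> C) (z1 z2 : R) : R := fst (f (z1, z2)).
Definition im_part (f : C -> C) (z1 z2 : R) : R := snd (f (z1, z2)).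

Definition pd (i : nat) (f : R -> R -> R) (x y : R) : R :=
  match i with
  | O => Derive (fun t => f t y) x
  | _ => Derive (fun t => f x t) y
  end.

Definition sum2 (F : nat -> R) : R := F 0%nat + F 1%nat.

(* A vector field X = X^1 d_1 + X^2 d_2, given by components (index 0,1). *)
Definition vfield := nat -> R -> R -> R.

Definition splitting (f : C -> C) : vfield :=
  fun k => match k with O => re_part f | _ => im_part f end.

Definition metric := nat -> nat -> R -> R -> R.

Definition ginv (g : metric) (k l : nat) (x y : R) : R :=
  let det := g 0%nat 0%nat x y * g 1%nat 1%nat x y
             - g 0%nat 1%nat x y * g 1%nat 0%nat x y in
  match k, l with
  | O, O => g 1%nat 1%nat x y / det
  | O, _ => - g 0%nat 1%nat x y / det
  | _, O => - g 1%nat 0%nat x y / det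
  | _, _ => g 0%nat 0%nat x y / det
  end.

Definition christoffel (g : metric) (k i j : nat) (x y : R) : R :=
  / 2 * sum2 (fun l => ginv g k l x y *
     (pd i (g j l) x y + pd j (g i l) x y - pd l (g i j) x y)).

Definition levi_civita (g : metric) (Y X : vfield) (k : nat) (x y : R) : R :=
  sum2 (fun i => Y i x y * pd i (X k) x y)
  + sum2 (fun i => sum2 (fun j => christoffel g k i j x y * Y i x y * X j x y)).

Definition metric_of (h : C -> C) : metric :=
  fun i j x y =>
    if Nat.eqb i j then / (re_part h x y ^ 2 + im_part h x y ^ 2) else 0.

Definition jac_apply (A v : vfield) (k : nat) (x y : R) : R :=
  sum2 (fun i => pd i (A k) x y * v i x y).

Definition E_apply (w : nat -> R) (k : nat) : R :=
  match k with O => - w 1%nat | _ => w 0%nat end.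

(* Main.v *)
Require Import Defs.
From Stdlib Require Import Reals Lra Lia.
From Coquelicot Require Import Coquelicot.
Open Scope R_scope.

Lemma Cmod_im (b : R) : Cmod (0, b) = Rabs b.
Proof.
  unfold Cmod; simpl. rewrite <- sqrt_Rsqr_abs. f_equal. unfold Rsqr. ring.
Qed.

Lemma Cdiff (f : C -> C) (x y : R) (l : C) :
  @is_derive C_AbsRing C_NormedModule f (x, y) l ->
  forall eps : posreal, exists d : posreal, forall w : C,
    Cmod (w - (x, y))%C < d ->
    Cmod (f w - f (x, y) - (w - (x, y)) * l)%C <= eps * Cmod (w - (x, y))%C.
Proof.
  intros [_ H] eps.
  specialize (H (x, y) (fun P HP => HP) eps).
  destruct H as [d Hd]. exists d. intros w Hw. apply Hd. exact Hw.
Qed.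

Lemma line0 (f : C -> C) (x y : R) (l : C) :
  @is_derive C_AbsRing C_NormedModule f (x, y) l ->
  forall eps : posreal, locally x (fun t =>
    Cmod (f (t, y) - f (x, y) - RtoC (t - x) * l)%C <= eps * Rabs (t - x)).
Proof.
  intros H eps. destruct (Cdiff f x y l H eps) as [d Hd]. exists d.
  intros t Ht.
  assert (E : ((t, y) - (x, y))%C = RtoC (t - x)).
  { unfold Cminus, Cplus, Copp, RtoC; simpl. f_equal; ring. }
  specialize (Hd (t, y)). rewrite E, Cmod_R in Hd. apply Hd. exact Ht.
Qed.

Lemma line1 (f : C -> C) (x y : R) (l : C) :
  @is_derive C_AbsRing C_NormedModule f (x, y) l ->
  forall eps : posreal, locally y (fun t =>
    Cmod (f (x, t) - f (x, y) - (0%R, (t - y)%R) * l)%C <= eps * Rabs (t - y)).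
Proof.
  intros H eps. destruct (Cdiff f x y l H eps) as [d Hd]. exists d.
  intros t Ht.
  assert (E : ((x, t) - (x, y))%C = (0, t - y)).
  { unfold Cminus, Cplus, Copp; simpl. f_equal; ring. }
  specialize (Hd (x, t)). rewrite E, Cmod_im in Hd. apply Hd. exact Ht.
Qed.

Lemma pd_gen (F : R -> R) (p : C -> R) (x d : R) (Hp : forall c, Rabs (p c) <= Cmod c)
  (c : R -> C) :
  (forall eps : posreal, locally x (fun t => Cmod (c t) <= eps * Rabs (t - x))) ->
  (forall t, p (c t) = F t - F x - (t - x) * d) ->
  is_derive F x d.
Proof.
  intros Hl Hc. split; [apply is_linear_scal_l|].
  intros x0 Hx0. apply (@is_filter_lim_locally_unique R_AbsRing R_NormedModule) in Hx0. subst x0.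
  intros eps. eapply filter_imp; [|apply (Hl eps)]. intros t Ht.
  change (Rabs (F t + - F x + - ((t + - x) * d)) <= eps * Rabs (t + - x)).
  eapply Rle_trans; [|exact Ht].
  replace (F t + - F x + - ((t + - x) * d)) with (p (c t)) by (rewrite Hc; ring).
  apply Hp.
Qed.

Lemma im_le_Cmod' (c : C) : Rabs (snd c) <= Cmod c.
Proof. eapply Rle_trans; [apply Rmax_r|apply Rmax_Cmod]. Qed.

Lemma re_le_Cmod' (c : C) : Rabs (fst c) <= Cmod c.
Proof. eapply Rle_trans; [apply Rmax_l|apply Rmax_Cmod]. Qed.

Lemma pdC (f : C -> C) (x y : R) (l : C) :
  @is_derive C_AbsRing C_NormedModule f (x, y) l ->
  pd 0 (re_part f) x y = fst l /\ pd 0 (im_part f) x y = snd l /\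
  pd 1 (re_part f) x y = - snd l /\ pd 1 (im_part f) x y = fst l.
Proof.
  intros H. unfold pd, re_part, im_part.
  repeat split; apply is_derive_unique.
  - eapply (pd_gen _ fst x _ re_le_Cmod'); [apply (line0 f x y l H)|].
    intros t. unfold Cminus, Cplus, Copp, Cmult, RtoC; simpl. ring.
  - eapply (pd_gen _ snd x _ im_le_Cmod'); [apply (line0 f x y l H)|].
    intros t. unfold Cminus, Cplus, Copp, Cmult, RtoC; simpl. ring.
  - eapply (pd_gen _ fst y _ re_le_Cmod'); [apply (line1 f x y l H)|].
    intros t. unfold Cminus, Cplus, Copp, Cmult, RtoC; simpl. ring.
  - eapply (pd_gen _ snd y _ im_le_Cmod'); [apply (line1 f x y l H)|].
    intros t. unfold Cminus, Cplus, Copp, Cmult, RtoC; simpl. ring.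
Qed.

Lemma is_derive_ginv (fu fv : R -> R) (x du dv : R) :
  is_derive fu x du -> is_derive fv x dv -> fu x ^ 2 + fv x ^ 2 <> 0 ->
  is_derive (fun t => / (fu t ^ 2 + fv t ^ 2)) x
    (- (2 * fu x * du + 2 * fv x * dv) / (fu x ^ 2 + fv x ^ 2) ^ 2).
Proof.
  intros Hu Hv Hn.
  pose proof (is_derive_plus _ _ _ _ _ (is_derive_pow _ 2 _ _ Hu) (is_derive_pow _ 2 _ _ Hv)) as Hs.
  pose proof (is_derive_inv _ _ _ Hs Hn) as Hi.
  match type of Hi with is_derive _ _ ?v => replace (- (2 * fu x * du + 2 * fv x * dv) / (fu x ^ 2 + fv x ^ 2) ^ 2) with v end.
  - exact Hi.
  - unfold plus; simpl. field. contradict Hn; rewrite <- Hn; ring.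
Qed.

Lemma pd_metric (h : C -> C) (x y : R) (l : C) (i j k : nat) :
  @is_derive C_AbsRing C_NormedModule h (x, y) l ->
  fst (h (x, y)) ^ 2 + snd (h (x, y)) ^ 2 <> 0 ->
  pd i (metric_of h j k) x y =
  if Nat.eqb j k then
    match i with
    | O => - (2 * fst (h (x, y)) * fst l + 2 * snd (h (x, y)) * snd l)
             / (fst (h (x, y)) ^ 2 + snd (h (x, y)) ^ 2) ^ 2
    | _ => - (2 * fst (h (x, y)) * (- snd l) + 2 * snd (h (x, y)) * fst l)
             / (fst (h (x, y)) ^ 2 + snd (h (x, y)) ^ 2) ^ 2
    end
  else 0.
Proof.
  intros H Hn. unfold metric_of.
  destruct (Nat.eqb j k).
  - destruct i as [|i]; unfold pd; apply is_derive_unique.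
    + apply is_derive_ginv; [| |exact Hn].
      * eapply (pd_gen _ fst x _ re_le_Cmod'); [apply (line0 h x y l H)|].
        intros t. unfold Cminus, Cplus, Copp, Cmult, RtoC; simpl. unfold re_part. ring.
      * eapply (pd_gen _ snd x _ im_le_Cmod'); [apply (line0 h x y l H)|].
        intros t. unfold Cminus, Cplus, Copp, Cmult, RtoC; simpl. unfold im_part. ring.
    + apply is_derive_ginv; [| |exact Hn].
      * eapply (pd_gen _ fst y _ re_le_Cmod'); [apply (line1 h x y l H)|].
        intros t. unfold Cminus, Cplus, Copp, Cmult, RtoC; simpl. unfold re_part. ring.
      * eapply (pd_gen _ snd y _ im_le_Cmod'); [apply (line1 h x y l H)|].
        intros t. unfold Cminus, Cplus, Copp, Cmult, RtoC; simpl. unfold im_part. ring.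
  - destruct i; unfold pd; apply Derive_const.
Qed.

Theorem lemma2 (U : C -> Prop) (h Xf : C -> C) :
  @open C_NormedModule U ->
  holomorphic_on U h ->
  (forall z : C, U z -> h z <> 0%C) ->
  holomorphic_on U Xf ->
  let g := metric_of h in
  let hv := splitting h in
  let hbar : vfield := fun k => match k with
                        | O => fun x y => - im_part h x y
                        | _ => re_part h end in
  let X := splitting Xf in
  let w := fun x y (k : nat) => jac_apply X hv k x y - jac_apply hv X k x y in
  forall z1 z2 : R, U (z1, z2) ->
    (forall k : nat, (k < 2)%nat ->
       levi_civita g hv X k z1 z2 = w z1 z2 k) /\
    (forall k : nat, (k < 2)%nat ->
       levi_civita g hbar X k z1 z2 = E_apply (w z1 z2) k).
Proof.
  intros _ Hh Hnz HX g hv hbar X w z1 z2 Hz.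
  destruct (Hh _ Hz) as [lh Hlh]. destruct (HX _ Hz) as [lx Hlx].
  assert (Hn : fst (h (z1, z2)) ^ 2 + snd (h (z1, z2)) ^ 2 <> 0).
  { intros E. apply (Hnz _ Hz).
    destruct (h (z1, z2)) as [u v]; simpl in E.
    assert (u = 0) by nra. assert (v = 0) by nra. subst. reflexivity. }
  destruct (pdC h z1 z2 lh Hlh) as [A0 [A1 [A2 A3]]].
  destruct (pdC Xf z1 z2 lx Hlx) as [B0 [B1 [B2 B3]]].
  pose proof (pd_metric h z1 z2 lh) as PM.
  subst g hv hbar X w.
  split; intros k Hk; (destruct k as [|[|k]]; [| |exfalso; lia]);
  unfold levi_civita, christoffel, ginv, jac_apply, E_apply, sum2; simpl splitting; cbv beta;
  rewrite ?PM by assumption; simpl splitting.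
  all: rewrite ?A0, ?A1, ?A2, ?A3, ?B0, ?B1, ?B2, ?B3; unfold metric_of;
    simpl Nat.eqb; cbv beta iota; unfold re_part, im_part.
  all: destruct lh as [a b]; destruct lx as [p q]; simpl fst; simpl snd.
  all: destruct (h (z1, z2)) as [u v]; destruct (Xf (z1, z2)) as [P Q]; simpl fst in *; simpl snd in *.
  all: field; try exact Hn.
Qed.
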